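(* Let $\alpha>-1$, $M\ge0$, $N\ge0$. For $n=1,2,3,\ldots$ let $$L_n^{\alpha,M,N}(x)=A_0L_n^{(\alpha)}(x)+A_1\frac{d}{dx}L_n^{(\alpha)}(x)+A_2\frac{d^2}{dx^2}L_n^{(\alpha)}(x),$$ where $$A_0=1+M\binom{n+\alpha}{n-1}+\frac{n(\alpha+2)-(\alpha+1)}{(\alpha+1)(\alpha+3)}N\binom{n+\alpha}{n-2}+\frac{MN}{(\alpha+1)(\alpha+2)}\binom{n+\alpha}{n-1}\binom{n+\alpha+1}{n-2},$$ $$A_1=M\binom{n+\alpha}{n}+\frac{n-1}{\alpha+1}N\binom{n+\alpha}{n-1}+\frac{2MN}{(\alpha+1)^2}\binom{n+\alpha}{n}\binom{n+\alpha+1}{n-2},$$ $$A_2=\frac{N}{\alpha+1}\binom{n+\alpha}{n-1}+\frac{MN}{(\alpha+1)^2}\binom{n+\alpha}{n}\binom{n+\alpha+1}{n-1}.$$ Then for every $n\ge1$, $y=L_n^{\alpha,M,N}$ satisfies the (infinite order) differential equation $$\sum_{i=0}^{\infty}b_i^*(\alpha,x)y^{(i)}(x)+M\sum_{i=0}^{\infty}c_i^*(\alpha,x)y^{(i)}(x)=0,$$ where $b_i^*(\alpha,x)=\frac{1}{i!}\sum_{j=0}^i(-1)^j\binom{i}{j}(\alpha+1)_{i-j}x^j$ and $c_i^*(\alpha,x)=\frac{(-1)^i}{i!}x^i$ for $i=0,1,2,\ldots$.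
   Context: $L_n^{(\alpha)}(x)=\binom{n+\alpha}{n}\,{}_1F_1\!\left(\begin{matrix}-n\\ \alpha+1\end{matrix};x\right)=\sum_{k=0}^n\frac{(-n)_k}{(\alpha+1)_k}\binom{n+\alpha}{n}\frac{x^k}{k!}$ is the classical Laguerre polynomial; $(a)_k$ is the Pochhammer symbol and $\binom{\gamma}{m}$ the generalized binomial coefficient (zero when $m<0$). The polynomials $L_n^{\alpha,M,N}$ are orthogonal with respect to the Sobolev inner product $\langle f,g\rangle=\frac{1}{\Gamma(\alpha+1)}\int_0^\infty x^\alpha e^{-x}f(x)g(x)\,dx+Mf(0)g(0)+Nf'(0)g'(0)$. The infinite sums are finite when applied to polynomials. *)

(* Defs.v *)
From HB Require Import structures.
From mathcomp Require Import all_boot all_order all_algebra.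
Set Implicit Arguments. Unset Strict Implicit. Unset Printing Implicit Defensive.
Import Order.TTheory GRing.Theory Num.Theory.
Local Open Scope ring_scope.

Definition poch {R : pzRingType} (a : R) (k : nat) : R :=
  \prod_(i < k) (a + i%:R).

Definition gbinom {R : fieldType} (g : R) (m : int) : R :=
  match m with
  | Posz k => (\prod_(i < k) (g - i%:R)) / (k`!)%:R
  | Negz _ => 0
  end.

Definition laguerre {R : fieldType} (alpha : R) (n : nat) : {poly R} :=
  \sum_(k < n.+1)
     ((poch (- n%:R) k) / (poch (alpha + 1) k) * gbinom (n%:R + alpha) n
        / (k`!)%:R) *: 'X^k.

Definition A0 {R : fieldType} (alpha M N : R) (n : nat) : R :=
  1 + M * gbinom (n%:R + alpha) (n%:Z - 1)
  + (n%:R * (alpha + 2) - (alpha + 1)) / ((alpha + 1) * (alpha + 3))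
      * N * gbinom (n%:R + alpha) (n%:Z - 2)
  + M * N / ((alpha + 1) * (alpha + 2))
      * gbinom (n%:R + alpha) (n%:Z - 1) * gbinom (n%:R + alpha + 1) (n%:Z - 2).

Definition A1 {R : fieldType} (alpha M N : R) (n : nat) : R :=
  M * gbinom (n%:R + alpha) n
  + (n%:R - 1) / (alpha + 1) * N * gbinom (n%:R + alpha) (n%:Z - 1)
  + 2 * M * N / (alpha + 1) ^+ 2
      * gbinom (n%:R + alpha) n * gbinom (n%:R + alpha + 1) (n%:Z - 2).

Definition A2 {R : fieldType} (alpha M N : R) (n : nat) : R :=
  N / (alpha + 1) * gbinom (n%:R + alpha) (n%:Z - 1)
  + M * N / (alpha + 1) ^+ 2
      * gbinom (n%:R + alpha) n * gbinom (n%:R + alpha + 1) (n%:Z - 1).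

Definition sobLaguerre {R : fieldType} (alpha M N : R) (n : nat) : {poly R} :=
  A0 alpha M N n *: laguerre alpha n
  + A1 alpha M N n *: (laguerre alpha n)^`()
  + A2 alpha M N n *: (laguerre alpha n)^`(2).

Definition bstar {R : fieldType} (alpha x : R) (i : nat) : R :=
  (i`!)%:R^-1 * \sum_(j < i.+1)
      (-1) ^+ j * ('C(i, j))%:R * poch (alpha + 1) (i - j) * x ^+ j.

Definition cstar {R : fieldType} (x : R) (i : nat) : R :=
  (-1) ^+ i / (i`!)%:R * x ^+ i.

(* Main.v *)
Require Import Defs.
From HB Require Import structures.
From mathcomp Require Import all_boot all_order all_algebra.
From mathcomp Require Import ring lra.
Set Implicit Arguments. Unset Strict Implicit. Unset Printing Implicit Defensive.
Import Order.TTheory GRing.Theory Num.Theory.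
Local Open Scope ring_scope.

Section S.
Variable R : realFieldType.

Lemma fact_neq0 (k : nat) : ((k`!)%:R : R) != 0.
Proof. by rewrite pnatr_eq0 -lt0n fact_gt0. Qed.

Lemma taylor0 (p : {poly R}) x K : (size p <= K)%N ->
  \sum_(i < K) ((-x) ^+ i / (i`!)%:R) * (p^`(i)).[x] = p`_0.
Proof.
move=> HK; rewrite -horner_coef0 -{2}(addrN x).
rewrite (@nderiv_taylor_wide _ K p x (-x) (mulrC x (-x)) HK).
apply: eq_bigr => i _; rewrite nderivn_def hornerMn -[X in _ * X]mulr_natr.
have := fact_neq0 i; move: (i`!%:R) => f hf; field; exact: hf.
Qed.

Lemma tri (F : nat -> nat -> R) K :
  \sum_(i < K) \sum_(j < i.+1) F j (i - j)%N =
  \sum_(k < K) \sum_(j < K - k) F j k.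
Proof.
elim: K => [|K IH]; first by rewrite !big_ord0.
rewrite big_ord_recr /= IH.
have -> : \sum_(k < K.+1) \sum_(j < K.+1 - k) F j k =
   \sum_(k < K.+1) (\sum_(j < K - k) F j k + F (K - k)%N k).
  apply: eq_bigr => k _; rewrite subSn ?big_ord_recr //; exact: ltn_ord k.
rewrite big_split /= [X in _ = X + _]big_ord_recr /= subnn big_ord0 addr0; congr (_ + _).
rewrite (reindex_inj rev_ord_inj) /=; apply: eq_bigr => j _.
by rewrite subSS subKn // -ltnS.
Qed.

Lemma bstarE (alpha x : R) i : bstar alpha x i =
  \sum_(j < i.+1) ((-x) ^+ j / (j`!)%:R) * (poch (alpha + 1) (i - j) / ((i - j)`!)%:R).
Proof.
rewrite /bstar mulr_sumr; apply: eq_bigr => [[j hj]] _ /=.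
have hji : (j <= i)%N by [].
have hC : ('C(i, j))%:R = (i`!)%:R / ((j`!)%:R * ((i - j)`!)%:R) :> R.
  by rewrite -(bin_fact hji) !natrM mulfK // mulf_neq0 // fact_neq0.
rewrite hC (exprNn x).
have h1 := fact_neq0 i; have h2 := fact_neq0 j; have h3 := fact_neq0 (i - j).
move: (i`!%:R) (j`!%:R) ((i-j)`!%:R) h1 h2 h3 => a b c ha hb hc.
by field; rewrite ha hb hc.
Qed.

Lemma size_derivn_le (p : {poly R}) K k : (size p <= K)%N -> (size (p^`(k)) <= K - k)%N.
Proof.
move=> HK; apply/leq_sizeP => j hj; rewrite coef_derivn nth_default ?mul0rn //.
apply: (leq_trans HK); by rewrite -leq_subLR.
Qed.

Lemma taylorI (alpha : R) (p : {poly R}) x K : (size p <= K)%N ->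
  \sum_(i < K) bstar alpha x i * (p^`(i)).[x] =
  \sum_(k < K) poch (alpha + 1) k * p`_k.
Proof.
move=> HK.
under eq_bigr => i _ do rewrite bstarE mulr_suml.
pose F j k := (-x) ^+ j / (j`!)%:R * (poch (alpha + 1) k / (k`!)%:R) * (p^`(j + k)).[x].
transitivity (\sum_(i < K) \sum_(j < i.+1) F j (i - j)%N).
  apply: eq_bigr => i _; apply: eq_bigr => [[j hj]] _ /=.
  by rewrite /F subnKC.
rewrite tri; apply: eq_bigr => [[k hk]] _ /=.
rewrite /F.
under eq_bigr => j _ do rewrite mulrAC /derivn iterD -/(derivn j _) -/(derivn k _).
rewrite -mulr_suml taylor0; last exact: size_derivn_le.
rewrite coef_derivn addn0 ffactnn -[p`_k *+ _]mulr_natr.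
have := fact_neq0 k; move: (k`!%:R) => f hf; field; exact: hf.
Qed.

Lemma cstar_sum (p : {poly R}) x K : (size p <= K)%N ->
  \sum_(i < K) cstar x i * (p^`(i)).[x] = p`_0.
Proof.
move=> HK; rewrite -(taylor0 x HK); apply: eq_bigr => i _.
by rewrite /cstar (exprNn x); congr (_ * _); rewrite mulrAC.
Qed.

Lemma poch_gt0 (a : R) k : 0 < a -> 0 < poch a k.
Proof. by move=> ha; apply: prodr_gt0 => i _; rewrite ltr_wpDr. Qed.

Lemma pochS (a : R) k : poch a k.+1 = poch a k * (a + k%:R).
Proof. by rewrite /poch big_ord_recr. Qed.

Lemma pochSl (a : R) k : poch a k.+1 = a * poch (a + 1) k.
Proof.
rewrite /poch big_ord_recl addr0; congr (_ * _); apply: eq_bigr => i _.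
rewrite /bump /= -natr1; ring.
Qed.

Lemma poch_negn (n k : nat) : poch (- (n%:R : R)) k = (-1) ^+ k * (n ^_ k)%:R.
Proof.
elim: k => [|k IH]; first by rewrite /poch big_ord0 expr0 mul1r.
rewrite pochS IH ffactnSr natrM exprS.
case: (leqP k n) => hk.
  rewrite natrB //; ring.
by rewrite ffact_small //; ring.
Qed.

Lemma sum_trunc (f : nat -> R) m N : (m <= N)%N -> (forall k, (m <= k)%N -> f k = 0) ->
  \sum_(k < N) f k = \sum_(k < m) f k.
Proof.
move=> hmN hf; rewrite (big_ord_widen N f hmN) [RHS]big_mkcond /=.
by apply: eq_bigr => k _; case: ltnP => // h; rewrite hf.
Qed.


Lemma recl (F : nat -> R) m : \sum_(i < m.+1) F i = F 0%N + \sum_(i < m) F i.+1.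
Proof. by rewrite big_ord_recl. Qed.

Lemma recr (F : nat -> R) m : \sum_(i < m.+1) F i = \sum_(i < m) F i + F m.
Proof. by rewrite big_ord_recr. Qed.

Lemma Sfun0 (b : R) m : 0 < b ->
  \sum_(k < m.+1) (-1) ^+ k * ('C(m, k))%:R / (b + k%:R) = (m`!)%:R / poch b m.+1.
Proof.
elim: m b => [|m IH] b hb.
  by rewrite big_ord1 pochS /poch big_ord0 expr0 bin0 fact0 !mul1r.
pose G (c : R) (k : nat) := (-1) ^+ k * ('C(m, k))%:R / (c + k%:R).
have E2 : \sum_(k < m.+2) (-1) ^+ k * ('C(m, k))%:R / (b + k%:R) = (m`!)%:R / poch b m.+1.
  by rewrite (recr (G b)) /G bin_small // mulr0 mul0r addr0 IH.
have E3 := IH (b + 1) (ltr_wpDr ler01 hb).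
rewrite (recl (G b)) in E2.
rewrite (recl (fun k => (-1) ^+ k * ('C(m.+1, k))%:R / (b + k%:R))).
have -> : \sum_(i < m.+1) (-1) ^+ i.+1 * ('C(m.+1, i.+1))%:R / (b + (i.+1)%:R) =
  \sum_(i < m.+1) (-1) ^+ i.+1 * ('C(m, i.+1))%:R / (b + (i.+1)%:R) -
  \sum_(i < m.+1) (-1) ^+ i * ('C(m, i))%:R / (b + 1 + i%:R).
  rewrite -sumrN -big_split /=; apply: eq_bigr => i _.
  rewrite binS natrD exprS -natr1; rewrite (addrC _ 1) addrA; ring.
rewrite addrA bin0 -(bin0 m); rewrite /G in E2; rewrite E2.
rewrite E3.
have hpb : poch b m.+1 != 0 by rewrite gt_eqF // poch_gt0.
have hbm : b + m.+1%:R != 0 by rewrite gt_eqF // ltr_wpDr.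
have hb0 : b != 0 by rewrite gt_eqF.
have e1 : poch b m.+2 = poch b m.+1 * (b + m.+1%:R) by rewrite pochS.
have e2 : poch (b + 1) m.+1 = poch b m.+1 * (b + m.+1%:R) / b.
  by rewrite -e1 (pochSl b m.+1) [b * _]mulrC mulfK.
rewrite e1 e2 factS natrM -natr1; rewrite -natr1 in hbm.
move: hpb hbm hb0; move: (poch b m.+1) (m`!%:R) (m%:R) => P f x h1 h2 h3.
field; by rewrite h1 h2 h3.
Qed.

Lemma Sfun (b : R) m N : 0 < b -> (m < N)%N ->
  \sum_(k < N) (-1) ^+ k * ('C(m, k))%:R / (b + k%:R) = (m`!)%:R / poch b m.+1.
Proof.
move=> hb hmN; rewrite (@sum_trunc (fun k => (-1) ^+ k * ('C(m, k))%:R / (b + k%:R)) m.+1) ?Sfun0 // => k hk.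
by rewrite bin_small // mulr0 mul0r.
Qed.

End S.

Section L.
Variable R : realFieldType.
Variable alpha : R.
Hypothesis ha : -1 < alpha.
Let a := alpha + 1.
Lemma a_gt0 : 0 < a. Proof. by rewrite /a -ltrBlDr sub0r. Qed.
Lemma ak_gt0 (k : nat) : 0 < a + k%:R. Proof. by rewrite ltr_wpDr // a_gt0. Qed.
Lemma ak_neq0 (k : nat) : a + k%:R != 0. Proof. by rewrite gt_eqF // ak_gt0. Qed.
Lemma poch_neq0 k : poch a k != 0. Proof. by rewrite gt_eqF // poch_gt0 // a_gt0. Qed.

Variable n : nat.
Let B := gbinom (n%:R + alpha) n.
Let L := laguerre alpha n.

Lemma coefL k : L`_k = poch (- n%:R) k / poch a k * B / (k`!)%:R.
Proof.
pose c (i : nat) := poch (- (n%:R : R)) i / poch a i * B / (i`!)%:R.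
rewrite /L /laguerre coef_sum (eq_bigr (fun i : 'I_n.+1 => if (i == k :> nat) then c i else 0)); last first.
  by move=> i _; rewrite coefZ coefXn mulr_natr mulrb eq_sym.
rewrite -big_mkcond (big_ord1_eq _ c); case: ltnP => // hk.
by rewrite /c poch_negn ffact_small // mulr0 !mul0r.
Qed.

Lemma pcoefL k : poch a k * L`_k = (-1) ^+ k * ('C(n, k))%:R * B.
Proof.
rewrite coefL poch_negn -bin_ffact natrM.
have := poch_neq0 k; have := fact_neq0 R k.
move: (poch a k) (k`!%:R) => u v hv hu; field.
by rewrite hu hv.
Qed.


Lemma poch0 (x : R) : poch x 0 = 1.
Proof. by rewrite /poch big_ord0. Qed.

Lemma Bpoch : B = poch a n / (n`!)%:R.
Proof.
rewrite /B /gbinom /poch; congr (_ / _).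
rewrite (reindex_inj rev_ord_inj) /=; apply: eq_bigr => i _.
rewrite natrB ?ltn_ord // -natr1 /a; ring.
Qed.

Lemma I0 N : (0 < n)%N -> (n < N)%N -> \sum_(k < N) poch a k * L`_k = 0.
Proof.
move=> hn hN.
under eq_bigr => k _ do rewrite pcoefL.
rewrite -mulr_suml (@sum_trunc _ (fun k => (-1) ^+ k * ('C(n, k))%:R) n.+1) //; last first.
  by move=> k hk; rewrite bin_small // mulr0.
have := exprBn (1 : R) 1 n; rewrite subrr expr0n; case: eqP => [h|_]; first by rewrite h in hn.
move=> E; rewrite [X in X * _](_ : _ = 0) ?mul0r //.
transitivity (false%:R : R); last by []. rewrite E.
by apply: eq_bigr => i _; rewrite !expr1n !mulr1 mulr_natr.
Qed.

Lemma I1 m N : n = m.+1 -> (n <= N)%N -> \sum_(k < N) poch a k * (L^`())`_k = -1.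
Proof.
move=> hnm hN.
have T k : poch a k * (L^`())`_k = - (n%:R * B) * ((-1) ^+ k * ('C(m, k))%:R / (a + k%:R)).
  rewrite coef_deriv -[L`_k.+1 *+ _]mulr_natr.
  have h := pcoefL k.+1.
  have hL : L`_k.+1 = (-1) ^+ k.+1 * ('C(n, k.+1))%:R * B / poch a k.+1.
    by rewrite -h mulrC mulKf // poch_neq0.
  have hc : ('C(n, k.+1))%:R = n%:R * ('C(m, k))%:R / (k.+1)%:R :> R.
    have := mul_bin_diag n k; rewrite hnm /= => e.
    rewrite -natrM e natrM; field; by rewrite addrC natr1 pnatr_eq0.
  rewrite hL hc pochS exprS.
  have h1 := poch_neq0 k; have h2 := ak_neq0 k.
  have h3 : (k.+1)%:R != 0 :> R by rewrite pnatr_eq0.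
  move: h1 h2 h3; move: (poch a k) (a + k%:R) ((k.+1)%:R) => P u v h1 h2 h3.
  field; by rewrite h1 h2 h3.
under eq_bigr => k _ do rewrite T.
rewrite -mulr_sumr (Sfun (b:=a) (m:=m) (N:=N) a_gt0); last by rewrite -hnm.
rewrite Bpoch hnm factS natrM -hnm.
have h1 := poch_neq0 n; have h2 := fact_neq0 R m.
have h3 : n%:R != 0 :> R by rewrite pnatr_eq0 hnm.
move: h1 h2 h3; move: (poch a n) (m`!%:R) (n%:R) => P u v h1 h2 h3.
field; by rewrite h1 h2 h3.
Qed.

Lemma I2 m N : n = m.+2 -> (n <= N)%N -> \sum_(k < N) poch a k * (L^`(2))`_k = (m.+1)%:R.
Proof.
move=> hnm hN.
have T k : poch a k * (L^`(2))`_k = (n%:R * (m.+1)%:R * B) *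
   ((-1) ^+ k * ('C(m, k))%:R / (a + k%:R) - (-1) ^+ k * ('C(m, k))%:R / (a + 1 + k%:R)).
  rewrite coef_derivn add2n ffactnS ffactn1 -[L`_k.+2 *+ _]mulr_natr.
  have h := pcoefL k.+2.
  have hL : L`_k.+2 = (-1) ^+ k.+2 * ('C(n, k.+2))%:R * B / poch a k.+2.
    by rewrite -h mulrC mulKf // poch_neq0.
  have hc1 : ('C(n, k.+2))%:R = n%:R * ('C(m.+1, k.+1))%:R / (k.+2)%:R :> R.
    have := mul_bin_diag n k.+1; rewrite hnm /= => e.
    rewrite -natrM e natrM; field; by rewrite -natrD pnatr_eq0.
  have hc2 : ('C(m.+1, k.+1))%:R = (m.+1)%:R * ('C(m, k))%:R / (k.+1)%:R :> R.
    have := mul_bin_diag m.+1 k; rewrite /= => e.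
    rewrite -natrM e natrM; field; by rewrite addrC natr1 pnatr_eq0.
  rewrite hL hc1 hc2 !pochS !exprS natrM.
  have h1 := poch_neq0 k; have h2 := ak_neq0 k; have h2' := ak_neq0 k.+1.
  have h3 : (k.+1)%:R != 0 :> R by rewrite pnatr_eq0.
  have h4 : (k.+2)%:R != 0 :> R by rewrite pnatr_eq0.
  rewrite -natr1 in h2'. rewrite -[(k.+1)%:R]natr1 in h2' *.
  rewrite -[(k.+2)%:R]natr1 in h4 *. rewrite -[(k.+1)%:R]natr1 in h4 h3 *.
  move: h1 h2 h2' h3 h4; move: (poch a k) (k%:R) => P u h1 h2 h2' h3 h4.
  rewrite /a in h2 h2' *.
  have h5 : alpha + 1 + 1 + u != 0 by rewrite -addrA (addrC 1).
  field; by rewrite h1 h2 h3 h4 h5.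
under eq_bigr => k _ do rewrite T.
have hmN : (m < N)%N by rewrite -ltnS ltnW // -hnm.
have ha1 : 0 < a + 1 by rewrite ltr_wpDr // a_gt0.
rewrite -mulr_sumr sumrB (Sfun (b:=a) (m:=m) (N:=N) a_gt0) //.
rewrite (Sfun (b:=a+1) (m:=m) (N:=N) ha1) //.
rewrite Bpoch hnm.
have e1 : poch a m.+2 = poch a m.+1 * (a + (m.+1)%:R) by rewrite pochS.
have e2 : poch (a + 1) m.+1 = poch a m.+1 * (a + (m.+1)%:R) / a.
  have h0 : a != 0 by rewrite gt_eqF // a_gt0.
  by rewrite -e1 (pochSl a m.+1) [a * _]mulrC mulfK.
rewrite e2 e1 !factS !natrM.
have h1 := poch_neq0 m.+1; have h2 := ak_neq0 m.+1; have h3 : a != 0 by rewrite gt_eqF // a_gt0.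
have h4 := fact_neq0 R m.
rewrite -natr1 in h2 *. rewrite -[(m.+2)%:R]natr1 -[(m.+1)%:R]natr1.
have h5 : m%:R + 1 + 1 != 0 :> R by rewrite !natr1 pnatr_eq0.
have h6 : m%:R + 1 != 0 :> R by rewrite natr1 pnatr_eq0.
move: h1 h2 h3 h4 h5 h6; move: (poch a m.+1) (m`!%:R) (m%:R) => P f u h1 h2 h3 h4 h5 h6.
field; by rewrite h1 h2 h3 h4 h5 h6.
Qed.

Lemma sizeL : (size L <= n.+1)%N.
Proof.
apply/leq_sizeP => k hk; rewrite coefL poch_negn ffact_small //; ring.
Qed.

Lemma I2one N : n = 1%N -> \sum_(k < N) poch a k * (L^`(2))`_k = 0.
Proof.
move=> h1; rewrite derivn_poly0 ?big1 // => [k _|]; first by rewrite coef0 mulr0.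
by have := sizeL; rewrite h1.
Qed.

Lemma V0 : L`_0 = B.
Proof. rewrite coefL !poch0 fact0; by field. Qed.

Lemma V1 : (L^`())`_0 = - n%:R / a * B.
Proof.
rewrite coef_deriv coefL !pochS !poch0 (_ : 1`! = 1)%N // !mul1r !addr0.
have h1 : a != 0 by rewrite gt_eqF // a_gt0.
move: h1; move: (a) => u h1; field; exact: h1.
Qed.

Lemma V2 : (L^`(2))`_0 = n%:R * (n%:R - 1) / (a * (a + 1)) * B.
Proof.
rewrite coef_derivn addn0 coefL !pochS !poch0 !mul1r !addr0 /= (_ : 2 ^_ 2 = 2)%N //.
have h1 : a != 0 by rewrite gt_eqF // a_gt0.
have h2 := ak_neq0 1.
move: h1 h2; move: (a) => u h1 h2.
rewrite (_ : 2`! = 2)%N // -[_ *+ 2]mulr_natr; field; by rewrite h1 h2.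
Qed.

End L.

Lemma prod_shift1 (R' : realFieldType) (g : R') (m : nat) :
  \prod_(i < m.+1) (g + 1 - i%:R) = (g + 1) * \prod_(i < m) (g - i%:R).
Proof.
rewrite big_ord_recl subr0; congr (_ * _); apply: eq_bigr => i _.
rewrite /bump /= -natr1; ring.
Qed.

Unset Implicit Arguments. Set Strict Implicit.

Theorem mainTheorem3 (R : realFieldType) (alpha M N : R) :
  -1 < alpha -> 0 <= M -> 0 <= N ->
  forall n : nat, (1 <= n)%N ->
  forall (x : R) (K : nat), (size (sobLaguerre alpha M N n) <= K)%N ->
    \sum_(i < K) bstar alpha x i * ((sobLaguerre alpha M N n)^`(i)).[x]
    + M * \sum_(i < K) cstar x i * ((sobLaguerre alpha M N n)^`(i)).[x] = 0.
Proof.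
move=> ha hM hN n hn x K HK.
rewrite (taylorI alpha x HK) (cstar_sum x HK).
set p := sobLaguerre alpha M N n in HK *.
set K' := maxn K n.+1.
have hK' : (n < K')%N by rewrite leq_maxr.
have E : \sum_(k < K) poch (alpha + 1) k * p`_k = \sum_(k < K') poch (alpha + 1) k * p`_k.
  symmetry; apply: (sum_trunc (f := fun k => poch (alpha + 1) k * p`_k)); first by rewrite leq_maxl.
  by move=> k hk; rewrite nth_default ?mulr0 // (leq_trans HK hk).
rewrite E /p /sobLaguerre.
set L := laguerre alpha n.
set a0 := A0 alpha M N n. set a1 := A1 alpha M N n. set a2 := A2 alpha M N n.
have S : \sum_(k < K') poch (alpha + 1) k * (a0 *: L + a1 *: L^`() + a2 *: L^`(2))`_k =
  a0 * \sum_(k < K') poch (alpha + 1) k * L`_k + a1 * \sum_(k < K') poch (alpha + 1) k * L^`()`_k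
  + a2 * \sum_(k < K') poch (alpha + 1) k * L^`(2)`_k.
  rewrite !mulr_sumr -!big_split; apply: eq_bigr => k _; rewrite !coefD !coefZ; rewrite /=; ring.
have I2v : \sum_(k < K') poch (alpha + 1) k * L^`(2)`_k = n%:R - 1.
  case: (ltnP 1 n) => h.
    have hm : n = (n - 2).+2 by rewrite -addn2 subnK.
    by rewrite (I2 ha hm (ltnW hK')) {2}hm -[in RHS]natr1 addrK.
  have h1 : n = 1%N by apply/eqP; rewrite eqn_leq h hn.
  by rewrite I2one // h1 subrr.
have hnm : n = n.-1.+1 by rewrite prednK.
rewrite S !coefD !coefZ (I0 ha hn hK') (I1 ha hnm (ltnW hK')) I2v V0 (V1 ha) (V2 ha).
clear I2v S E hnm; rewrite {}/a0 {}/a1 {}/a2; clear L HK hK' K' p.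
have h1 : alpha + 1 != 0 by rewrite gt_eqF //; lra.
have h2 : alpha + 1 + 1 != 0 by rewrite gt_eqF //; lra.
have h3 : alpha + 2 != 0 by rewrite gt_eqF //; lra.
have h4 : alpha + 3 != 0 by rewrite gt_eqF //; lra.
case: n hn => [//|[|m]] _.
  rewrite /A0 /A1 /A2 (_ : (1%:Z - 1) = Posz 0) // (_ : (1%:Z - 2) = Negz 0) // /gbinom /= !big_ord0 !big_ord1.
  rewrite fact0 (_ : 1`! = 1)%N // (_ : (ord0 : 'I_1) = 0%N :> nat) //. field; by rewrite h1 h2 h4.
rewrite /A0 /A1 /A2 (_ : ((m.+2)%:Z - 1) = Posz m.+1); last by rewrite -addn1 PoszD addrK.
rewrite (_ : ((m.+2)%:Z - 2) = Posz m); last by rewrite -addn2 PoszD addrK.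
rewrite /gbinom.
set g := (m.+2)%:R + alpha.
have eg : g + 1 - m%:R = alpha + 3 by rewrite /g -!natr1; ring.
have eQ : \prod_(i < m) (g + 1 - i%:R) = (g + 1) * \prod_(i < m) (g - i%:R) / (alpha + 3).
  have e := prod_shift1 g m; rewrite big_ord_recr /= eg in e.
  by rewrite -e mulfK.
rewrite prod_shift1 eQ !big_ord_recr /= !factS !natrM.
move: eQ; clear eg; rewrite /g; move: (\prod_(i < m) (g - i%:R)) => P _.
have h5 := fact_neq0 R m.
have h6 : m%:R + 1 + 1 != 0 :> R by rewrite !natr1 pnatr_eq0.
have h7 : m%:R + 1 != 0 :> R by rewrite natr1 pnatr_eq0.
rewrite -!natr1.
move: h5 h6 h7; move: (m`!%:R) (m%:R) => f u h5 h6 h7.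
field; by rewrite h1 h2 h4 h5 h6 h7.
Qed.
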